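(* Let $F$ be a commutative field, $1\le h\le n-1$, and let $K$ be a linear complex of $h$-subspaces in $\mathrm{PG}(n,F)$. Then the set of all singular $(h-1)$-subspaces of $K$ equals $(\mathcal G_{n,h-1}\cap W)^{\wp_{n,h-1}^{-1}}$ for some subspace $W$ of $\mathrm{PG}\big(\binom{n+1}{h}-1,F\big)$ with $\binom{n+1}{h}-(n+2)\le\dim W\le\binom{n+1}{h}-(h+2)$.
   Context: A $d$-subspace is a projective subspace of dimension $d$. For $0\le k\le n-1$, $\wp_{n,k}$ denotes the Plücker embedding sending the $k$-subspace spanned by independent $v_0,\dots,v_k\in F^{n+1}$ to $F(v_0\wedge\cdots\wedge v_k)$ in $\mathrm{PG}\big(\binom{n+1}{k+1}-1,F\big)=\mathbb P(\bigwedge^{k+1}F^{n+1})$; its image is the Grassmann variety $\mathcal G_{n,k}$. A linear complex of $h$-subspaces is the set of $h$-subspaces whose image under $\wp_{n,h}$ lies in a fixed hyperplane of $\mathrm{PG}\big(\binom{n+1}{h+1}-1,F\big)$. An $(h-1)$-subspace $U$ is singular for $K$ if every $h$-subspace containing $U$ belongs to $K$. *)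

(* Defs.v *)
From HB Require Import structures.
From mathcomp Require Import all_boot all_order all_algebra.
Set Implicit Arguments. Unset Strict Implicit. Unset Printing Implicit Defensive.
Import GRing.Theory.
Local Open Scope ring_scope.

(* Projective space PG(n,F) = P(F^(n+1)); vectors of F^(n+1) are 'rV[F]_(n.+1).
   A projective d-subspace is a vector subspace U : {vspace 'rV[F]_(n.+1)}
   with \dim U = d+1. *)

Section Plucker.
Variable F : fieldType.
Variable n : nat.

(* The m-element subsets of the coordinate set {0..n}, in a fixed enumeration;
   this list has length 'C(n+1, m) and indexes the standard basis
   e_{i_1} /\ ... /\ e_{i_m} of the m-th exterior power of F^(n+1). *)
Definition msubsets (m : nat) : seq {set 'I_(n.+1)} :=
  enum [set S : {set 'I_(n.+1)} | #|S| == m].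

Definition pl_minor (U : {vspace 'rV[F]_(n.+1)}) (S : {set 'I_(n.+1)}) : F :=
  \det (\matrix_(i < \dim U, j < \dim U)
          (tnth (vbasis U) i) 0 (nth ord0 (enum S) j)).

(* The Plucker vector of U (with \dim U = m) in F^('C(n+1,m)) = /\^m F^(n+1);
   wp_{n,m-1}(U) is the projective point spanned by this vector. *)
Definition plucker (m : nat) (U : {vspace 'rV[F]_(n.+1)}) : 'rV[F]_('C(n.+1, m)) :=
  \row_(j < 'C(n.+1, m)) pl_minor U (nth set0 (msubsets m) j).

(* The linear complex of h-subspaces associated with a hyperplane H of
   PG('C(n+1,h+1)-1, F): the h-subspaces whose Plucker image lies in H. *)
Definition in_linear_complex (h : nat) (H : {vspace 'rV[F]_('C(n.+1, h.+1))})
    (U : {vspace 'rV[F]_(n.+1)}) : Prop :=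
  \dim U = h.+1 /\ plucker h.+1 U \in H.

Definition is_hyperplane (N : nat) (H : {vspace 'rV[F]_N}) : Prop :=
  \dim H = N.-1.

Definition singular_for (h : nat) (H : {vspace 'rV[F]_('C(n.+1, h.+1))})
    (V : {vspace 'rV[F]_(n.+1)}) : Prop :=
  \dim V = h /\
  forall U : {vspace 'rV[F]_(n.+1)}, \dim U = h.+1 -> (V <= U)%VS ->
    in_linear_complex H U.

End Plucker.

(* Main.v *)
Require Import Defs.
From HB Require Import structures.
From mathcomp Require Import all_boot all_order all_algebra.
From mathcomp Require Import ring zify.
Set Implicit Arguments. Unset Strict Implicit. Unset Printing Implicit Defensive.
Import GRing.Theory.
Local Open Scope ring_scope.

Section Gen.
Variable F : fieldType.
Variable n : nat.
Local Notation vT := 'rV[F]_(n.+1).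

Definition colsel m p (Y : m.-tuple vT) (S : {set 'I_n.+1}) : 'M[F]_(m, p) :=
  \matrix_(i < m, j < p) (tnth Y i) 0 (nth ord0 (enum S) j).

Definition gminor m (Y : m.-tuple vT) S := \det (colsel m Y S).

Definition cmx m k (Y : m.-tuple vT) (Z : k.-tuple vT) : 'M[F]_(m, k) :=
  \matrix_(i, j) coord Z j (tnth Y i).

Lemma coef_mx m k p (Y : m.-tuple vT) (Z : k.-tuple vT) S :
  {subset Y <= <<Z>>%VS} -> colsel p Y S = cmx Y Z *m colsel p Z S.
Proof.
move=> sYZ; apply/matrixP => i j; rewrite !mxE.
have Yi : tnth Y i \in <<Z>>%VS by apply: sYZ; rewrite mem_tnth.
rewrite {1}(coord_span Yi) summxE. apply: eq_bigr => j0 _.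
by rewrite !mxE (tnth_nth 0 Z).
Qed.

Lemma gminor_dep m (Y : m.+1.-tuple vT) (Z : m.-tuple vT) S :
  {subset Y <= <<Z>>%VS} -> gminor Y S = 0.
Proof.
move=> sYZ; rewrite /gminor (coef_mx _ S sYZ).
apply/eqP; apply: contraT => nz.
have : (cmx Y Z *m colsel m.+1 Z S) \in unitmx by rewrite unitmxE unitfE.
move/mxrank_unit => r.
have := mxrankM_maxr (cmx Y Z) (colsel m.+1 Z S).
by rewrite r => /leq_trans/(_ (rank_leq_row _)); rewrite ltnn.
Qed.

Lemma gminor_basis m (Y Z : m.-tuple vT) :
  {subset Y <= <<Z>>%VS} -> {subset Z <= <<Y>>%VS} -> free Z ->
  exists2 c, c != 0 & forall S, gminor Y S = c * gminor Z S.
Proof.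
move=> sYZ sZY fZ; exists (\det (cmx Y Z)); last first.
  by move=> S; rewrite /gminor (coef_mx _ S sYZ) det_mulmx.
have QP : cmx Z Y *m cmx Y Z = 1%:M.
  apply/matrixP => i k; rewrite !mxE.
  have Zi : tnth Z i \in <<Y>>%VS by apply: sZY; rewrite mem_tnth.
  have := coord_free i k fZ; rewrite -(tnth_nth 0).
  rewrite {1}(coord_span Zi) linear_sum /= => <-.
  apply: eq_bigr => j _; rewrite linearZ /= !mxE.
  have Yj : tnth Y j \in <<Z>>%VS by apply: sYZ; rewrite mem_tnth.
  by rewrite (tnth_nth 0 Y).
apply/eqP => d0.
have := congr1 determinant QP; rewrite det_mulmx d0 mulr0 det1 => /eqP.
by rewrite eq_sym oner_eq0.
Qed.


Lemma enum_setD1 (S : {set 'I_n.+1}) x :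
  enum (S :\ x) = filter (predC1 x) (enum S).
Proof.
rewrite /enum_mem -filter_predI; apply: eq_filter => y /=.
by rewrite !inE.
Qed.

Lemma nth_enum_setD1 (S : {set 'I_n.+1}) (k j : nat) :
  (k < #|S|)%N ->
  nth ord0 (enum (S :\ nth ord0 (enum S) k)) j = nth ord0 (enum S) (bump k j).
Proof.
move=> kS; rewrite enum_setD1 -rem_filter ?enum_uniq // remE.
rewrite index_uniq ?enum_uniq -?cardE //.
have sk : size (take k (enum S)) = k by rewrite size_take -cardE kS.
rewrite nth_cat sk /bump; case: ltnP => [jk | kj].
  by rewrite nth_take // (leqNgt k j) jk addn0.
rewrite nth_drop add1n addSn subnKC //.
Qed.

Lemma gminor_rcons h (X : h.-tuple vT) u (S : {set 'I_n.+1}) : #|S| = h.+1 ->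
  gminor [tuple of rcons X u] S =
  \sum_(k < h.+1) (-1)^+(h + k) * u 0 (nth ord0 (enum S) k)
                 * gminor X (S :\ nth ord0 (enum S) k).
Proof.
move=> cS; rewrite /gminor (expand_det_row _ ord_max); apply: eq_bigr => k _.
rewrite /cofactor !mxE (tnth_nth 0) /= nth_rcons size_tuple ltnn eqxx.
rewrite mulrCA mulrA; congr (_ * _ * \det _).
apply/matrixP => i j; rewrite !mxE (tnth_nth 0) /= nth_rcons size_tuple.
have -> : bump h i = i by rewrite /bump leqNgt ltn_ord.
by rewrite ltn_ord -(tnth_nth 0) nth_enum_setD1 // cS ltn_ord.
Qed.

End Gen.

Lemma gminor_tcast (F : fieldType) n m m' (e : m = m') (Y : m.-tuple 'rV[F]_(n.+1)) (S : {set 'I_n.+1}) :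
  gminor (tcast e Y) S = gminor Y S.
Proof. by case: m' / e; rewrite tcast_id. Qed.

Section Main.
Variable F : fieldType.
Variables n h : nat.
Local Notation vT := 'rV[F]_(n.+1).

Lemma size_ms m : size (msubsets n m) = 'C(n.+1, m).
Proof. by rewrite /msubsets -cardE card_draws card_ord. Qed.

Lemma mem_ms m (S : {set 'I_n.+1}) : (S \in msubsets n m) = (#|S| == m).
Proof. by rewrite mem_enum inE. Qed.

Lemma card_ms m (l : 'I_('C(n.+1, m))) : #|nth set0 (msubsets n m) l| = m.
Proof. by apply/eqP; rewrite -mem_ms mem_nth // size_ms. Qed.

Lemma ms_index m (S : {set 'I_n.+1}) : #|S| = m ->
  {K : 'I_('C(n.+1, m)) | forall K' : 'I_('C(n.+1, m)), (nth set0 (msubsets n m) K' == S) = (K' == K)}.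
Proof.
move=> cS; have Sin : S \in msubsets n m by rewrite mem_ms cS.
have lt : (index S (msubsets n m) < 'C(n.+1, m))%N by rewrite -size_ms index_mem.
exists (Ordinal lt) => K'; apply/eqP/eqP => [HS | ->].
  by apply: val_inj => /=; rewrite -HS index_uniq ?enum_uniq // size_ms.
by rewrite /= nth_index.
Qed.

Definition pS (p : 'rV[F]_('C(n.+1, h))) (T : {set 'I_n.+1}) : F :=
  \sum_(k < 'C(n.+1, h) | nth set0 (msubsets n h) k == T) p 0 k.

Lemma pS_plucker (V : {vspace vT}) (T : {set 'I_n.+1}) : #|T| = h -> pS (plucker h V) T = pl_minor V T.
Proof.
move=> cT; have [K HK] := ms_index cT.
rewrite /pS (eq_bigl _ _ HK) big_pred1_eq mxE.
by move: (HK K); rewrite eqxx => /eqP ->.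
Qed.

Definition Lam (p : 'rV[F]_('C(n.+1, h))) (u : vT) (l : 'I_('C(n.+1, h.+1))) : F :=
  let S := nth set0 (msubsets n h.+1) l in
  \sum_(k < h.+1) (-1)^+(h + k) * u 0 (nth ord0 (enum S) k)
                 * pS p (S :\ nth ord0 (enum S) k).

Lemma Lam_plucker (V : {vspace vT}) (e : \dim V = h) u l :
  Lam (plucker h V) u l =
  gminor [tuple of rcons (tcast e (vbasis V)) u] (nth set0 (msubsets n h.+1) l).
Proof.
rewrite gminor_rcons ?card_ms //; apply: eq_bigr => k _.
rewrite pS_plucker ?gminor_tcast //.
have := card_ms l; rewrite (cardsD1 (nth ord0 (enum (nth set0 (msubsets n h.+1) l)) k)).
rewrite -mem_enum mem_nth ?card_ms -?cardE ?card_ms //.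
by rewrite add1n => -[].
Qed.

Definition Phi (w : 'I_('C(n.+1, h.+1)) -> F) p u :=
  \sum_(l < 'C(n.+1, h.+1)) w l * Lam p u l.

Lemma PhiD1 w p q u : Phi w (p + q) u = Phi w p u + Phi w q u.
Proof.
rewrite /Phi -big_split; apply: eq_bigr => l _ /=; rewrite -mulrDr /Lam -big_split /=.
congr (_ * _); apply: eq_bigr => k _ /=; rewrite -mulrDr /pS -big_split /=.
by congr (_ * _); apply: eq_bigr => K _; rewrite mxE.
Qed.

Lemma PhiZ1 w a p u : Phi w (a *: p) u = a * Phi w p u.
Proof.
rewrite /Phi mulr_sumr; apply: eq_bigr => l _ /=; rewrite mulrCA; congr (_ * _).
rewrite /Lam mulr_sumr; apply: eq_bigr => k _ /=; rewrite mulrCA; congr (_ * _).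
by rewrite /pS mulr_sumr; apply: eq_bigr => K _; rewrite mxE.
Qed.

Lemma PhiD2 w p u v : Phi w p (u + v) = Phi w p u + Phi w p v.
Proof.
rewrite /Phi -big_split; apply: eq_bigr => l _ /=; rewrite -mulrDr /Lam -big_split /=.
by congr (_ * _); apply: eq_bigr => k _ /=; rewrite mxE; ring.
Qed.

Lemma PhiZ2 w a p u : Phi w p (a *: u) = a * Phi w p u.
Proof.
rewrite /Phi mulr_sumr; apply: eq_bigr => l _ /=; rewrite mulrCA; congr (_ * _).
by rewrite /Lam mulr_sumr; apply: eq_bigr => k _ /=; rewrite mxE; ring.
Qed.

Lemma Phi_sum1 w p u :
  Phi w p u = \sum_(k < 'C(n.+1, h)) p 0 k * Phi w (delta_mx 0 k) u.
Proof.
have P0 : Phi w 0 u = 0 by rewrite -(scale0r 0) PhiZ1 mul0r.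
rewrite {1}(row_sum_delta p) (big_morph (fun p => Phi w p u) (fun p q => PhiD1 w p q u) P0).
by apply: eq_bigr => k _; rewrite PhiZ1.
Qed.

Lemma Phi_sum2 w p u :
  Phi w p u = \sum_(j < n.+1) u 0 j * Phi w p (delta_mx 0 j).
Proof.
have P0 : Phi w p 0 = 0 by rewrite -(scale0r 0) PhiZ2 mul0r.
rewrite {1}(row_sum_delta u) (big_morph (fun u => Phi w p u) (PhiD2 w p) P0).
by apply: eq_bigr => k _; rewrite PhiZ2.
Qed.

Lemma basis_tcast (V : {vspace vT}) m (e : \dim V = m) :
  <<tcast e (vbasis V)>>%VS = V /\ free (tcast e (vbasis V)).
Proof.
rewrite val_tcast; have B := vbasisP V.
by split; [exact: span_basis B | exact: basis_free B].
Qed.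

Lemma rcons_free (X : h.-tuple vT) u : free X -> u \notin <<X>>%VS ->
  free (rcons X u) /\ \dim <<rcons X u>> = h.+1.
Proof.
move=> fX uX; have fY : free (rcons X u).
  have pe : perm_eq (rcons X u) (u :: X) by rewrite perm_rcons perm_refl.
  by rewrite (perm_free pe) free_cons uX fX.
by split => //; move: fY; rewrite /free size_rcons size_tuple => /eqP.
Qed.

Lemma key_a (V : {vspace vT}) (e : \dim V = h) u l : u \in V ->
  Lam (plucker h V) u l = 0.
Proof.
move=> uV; rewrite Lam_plucker; have [sX _] := basis_tcast e.
apply: (gminor_dep (Z := tcast e (vbasis V))) => x /=; rewrite mem_rcons inE => /orP[/eqP -> | xX].
  by rewrite sX.
exact: memv_span.
Qed.

Lemma key_b (V U : {vspace vT}) (eV : \dim V = h) (eU : \dim U = h.+1) u :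
  (V <= U)%VS -> u \in U -> u \notin V ->
  exists2 c : F, c != 0 & forall l, Lam (plucker h V) u l = c * plucker h.+1 U 0 l.
Proof.
move=> VU uU uV; have [sX fX] := basis_tcast eV; have [sZ fZ] := basis_tcast eU.
set X := tcast eV (vbasis V) in sX fX *; set Z := tcast eU (vbasis U) in sZ fZ *.
have uX : u \notin <<X>>%VS by rewrite sX.
have [fY dY] := rcons_free fX uX.
have sYU : {subset [tuple of rcons X u] <= U}.
  move=> x /=; rewrite mem_rcons inE => /orP[/eqP -> // | xX].
  by apply: (subvP VU); rewrite -sX memv_span.
have spY : <<rcons X u>>%VS = U.
  apply/eqP; rewrite eqEdim dY eU leqnn andbT; exact/span_subvP.
have H1 : {subset [tuple of rcons X u] <= <<Z>>%VS}.
  by move=> x xY; rewrite sZ; apply: sYU.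
have H2 : {subset Z <= <<[tuple of rcons X u]>>%VS}.
  by move=> x xZ; rewrite /= spY -sZ memv_span.
have [c c0 hc] := gminor_basis H1 H2 fZ.
exists c => // l; rewrite Lam_plucker hc mxE /pl_minor.
by rewrite /Z (gminor_tcast eU).
Qed.

Definition Gm (w : 'I_('C(n.+1, h.+1)) -> F) : 'M[F]_('C(n.+1, h), n.+1) :=
  \matrix_(k, j) Phi w (delta_mx 0 k) (delta_mx 0 j).

Lemma GmE w p j : (p *m Gm w) 0 j = Phi w p (delta_mx 0 j).
Proof.
by rewrite mxE Phi_sum1; apply: eq_bigr => k _; rewrite mxE.
Qed.

Lemma pS_delta (K0 : 'I_('C(n.+1, h))) T : pS (delta_mx 0 K0) T = (nth set0 (msubsets n h) K0 == T)%:R.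
Proof.
rewrite /pS big_mkcond (bigD1 K0) //= big1 ?addr0 => [|K KK0].
  by rewrite mxE !eqxx /=; case: eqP.
by rewrite mxE (negPf KK0) andbF; case: ifP.
Qed.

Lemma Phi_delta w (l0 : 'I_('C(n.+1, h.+1))) (k k' : 'I_h.+1) (K0 : 'I_('C(n.+1, h))) :
  let T := nth set0 (msubsets n h.+1) l0 in
  let t := nth ord0 (enum T) in
  nth set0 (msubsets n h) K0 = T :\ t k ->
  Phi w (delta_mx 0 K0) (delta_mx 0 (t k')) =
  if k == k' then w l0 * (-1)^+(h + k') else 0.
Proof.
move=> T t eK.
have cT : #|T| = h.+1 by rewrite card_ms.
have tT (i : 'I_h.+1) : t i \in T by rewrite -mem_enum mem_nth // -cardE cT.
have tinj (i j : 'I_h.+1) : (t i == t j) = (i == j).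
  by rewrite nth_uniq ?enum_uniq // -cardE cT.
have key (l : 'I_('C(n.+1, h.+1))) (k'' : 'I_h.+1) :
  let S := nth set0 (msubsets n h.+1) l in
  (nth ord0 (enum S) k'' == t k') && (S :\ nth ord0 (enum S) k'' == T :\ t k)
  = [&& l == l0, k'' == k' & k == k'].
  move=> S; apply/andP/and3P => [[/eqP e1 /eqP e2] | [/eqP el /eqP ek /eqP ekk]].
    have sS : nth ord0 (enum S) k'' \in S.
      by rewrite -mem_enum mem_nth // -cardE /S card_ms.
    have eS : S = t k' |: (T :\ t k) by rewrite -e1 -e2 setD1K.
    have ekk : k == k'.
      apply: contraT => nkk.
      have : t k' \in T :\ t k by rewrite !inE tT andbT eq_sym tinj.
      move=> tin.
      have eS' : t k' |: (T :\ t k) = T :\ t k by apply/setUidPr; rewrite sub1set.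
      have := card_ms l; rewrite -/S eS eS' => cS.
      have := cardsD1 (t k) T; rewrite cT cS tT /=; lia.
    have eST : S = T by rewrite eS (eqP ekk) setD1K.
    have el : l == l0.
      apply/eqP/val_inj/eqP; move: eST; rewrite /S /T => /eqP.
      by rewrite nth_uniq ?enum_uniq // size_ms.
    have e3 : t k'' = t k' by rewrite /t -{1}eST; exact: e1.
    by rewrite el ekk -tinj e3 eqxx.
  subst; split; first by rewrite -/S.
  by rewrite -/S.
rewrite /Phi.
transitivity (\sum_(l < 'C(n.+1, h.+1)) \sum_(k'' < h.+1)
   (if [&& l == l0, k'' == k' & k == k'] then w l * (-1)^+(h + k'') else 0)).
  apply: eq_bigr => l _; rewrite /Lam mulr_sumr; apply: eq_bigr => k'' _.
  rewrite -key pS_delta eK mxE eqxx /=.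
  rewrite [T :\ t k == _]eq_sym.
  case: (_ == t k'); case: (_ == T :\ t k) => /=; by rewrite ?mulr1 ?mulr0.
rewrite (bigD1 l0) //= [X in _ + X]big1 ?addr0; last first.
  by move=> l /negPf nl; apply: big1 => k'' _; rewrite nl.
rewrite (bigD1 k') //= [X in _ + X]big1 ?addr0; last first.
  by move=> k'' /negPf nk; rewrite nk andbF.
by rewrite !eqxx.
Qed.

Definition fl w : 'Hom('rV[F]_('C(n.+1, h)), 'rV[F]_(n.+1)) :=
  linfun (@mulmxr F 1 _ _ (Gm w)).

Lemma flE w p : fl w p = p *m Gm w.
Proof. by rewrite /fl lfunE. Qed.

Lemma sgn_neq0 k : ((-1) ^+ k : F) != 0.
Proof. by rewrite expf_neq0 // oppr_eq0 oner_eq0. Qed.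

Lemma rank_lb w (l0 : 'I_('C(n.+1, h.+1))) : w l0 != 0 ->
  (h.+1 <= \dim (limg (fl w)))%N.
Proof.
move=> w0; set T := nth set0 (msubsets n h.+1) l0; set t := nth ord0 (enum T).
have cT : #|T| = h.+1 by rewrite card_ms.
have tT (i : 'I_h.+1) : t i \in T by rewrite -mem_enum mem_nth // -cardE cT.
have cD (k : 'I_h.+1) : #|T :\ t k| = h.
  by move: (cardsD1 (t k) T); rewrite cT tT /= add1n => -[].
pose K (k : 'I_h.+1) := sval (ms_index (cD k)).
have eK k : nth set0 (msubsets n h) (K k) = T :\ t k.
  by apply/eqP; rewrite /K; case: (ms_index (cD k)) => /= K0 ->.
pose Y := [tuple (delta_mx (0 : 'I_1) (K k) *m Gm w) | k < h.+1].
have Yt (k k' : 'I_h.+1) : Y`_k 0 (t k') = if k == k' then w l0 * (-1)^+(h + k') else 0.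
  by rewrite -tnth_nth tnth_mktuple GmE (@Phi_delta w l0 k k' (K k) (eK k)).
have fY : free Y.
  apply/freeP => a sa k'; move: (congr1 (fun x : 'rV_(n.+1) => x 0 (t k')) sa) => /=.
  rewrite summxE (bigD1 k') //= [X in _ + X]big1 ?addr0; last first.
    by move=> k /negPf nk; rewrite mxE Yt nk mulr0.
  rewrite mxE Yt eqxx mxE => /eqP; rewrite mulf_eq0 mulf_eq0 (negPf w0) (negPf (sgn_neq0 _)).
  by rewrite !orbF => /eqP.
have sub : (<<Y>> <= limg (fl w))%VS.
  apply/span_subvP => x /tnthP [k ->]; rewrite tnth_mktuple.
  rewrite -flE.
  exact: memv_img (memvf _).
have := dimvS sub; move: fY; rewrite /free size_tuple => /eqP ->.
by [].
Qed.

End Main.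

Section Hyp.
Variable F : fieldType.

Lemma dim_rV N : \dim (fullv : {vspace 'rV[F]_N}) = N.
Proof. by rewrite dimvf dim_matrix mul1r. Qed.

Lemma hyp_fun N (H : {vspace 'rV[F]_N}) : (0 < N)%N -> \dim H = N.-1 ->
  exists w : 'I_N -> F,
    (forall x, (x \in H) <-> \sum_l x 0 l * w l = 0) /\ exists l, w l != 0.
Proof.
move=> N0 dH.
have [c cH] : exists c : 'rV[F]_N, c \notin H.
  case: (boolP (has (fun c => c \notin H) (vbasis fullv))) => [/hasP[c ? ?] | /hasPn allH].
    by exists c.
  have : (<<vbasis fullv>> <= H)%VS by apply/span_subvP => x /allH; rewrite negbK.
  rewrite (span_basis (vbasisP _)) => /dimvS; rewrite dim_rV dH.
  by rewrite leqNgt ltn_predL N0.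
have c0 : c != 0 by apply: contraNneq cH => ->; rewrite mem0v.
pose L := <[c]>%VS.
have LH : (L :&: H = 0)%VS.
  apply/eqP; rewrite -dimv_eq0; apply: contraNT cH => nz.
  have e : (L :&: H == L)%VS by rewrite eqEdim capvSl dim_vline c0 lt0n.
  by have := memv_line c; rewrite -/L -(eqP e) => /memv_capP[].
have LHf : (L + H)%VS = fullv.
  apply/eqP; rewrite eqEdim subvf dimv_disjoint_sum // dim_vline c0 dH dim_rV.
  by rewrite /= add1n prednK.
pose psi := daddv_pi L H.
have psiH x : (x \in H) <-> psi x = 0.
  have xs : x \in (L + H)%VS by rewrite LHf memvf.
  have e := daddv_pi_add LH xs; rewrite -/psi in e.
  split => [xH | p0].
    have HL : (H :&: L = 0)%VS by rewrite capvC.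
    by apply: (addIr (daddv_pi H L x)); rewrite e add0r (daddv_pi_id HL xH).
  by rewrite -e p0 add0r memv_pi.
have fc : free [tuple c] by rewrite seq1_free.
have cc : coord [tuple c] 0 c = 1.
  by have := @coord_free _ _ _ [tuple c] 0 0 fc; rewrite eqxx.
pose phi x := coord [tuple c] 0 (psi x).
have phiE x : (psi x = 0) <-> phi x = 0.
  have [k ek] : exists k, psi x = k *: c by apply/vlineP; exact: memv_pi.
  have ck : phi x = k by rewrite /phi ek linearZ /= cc mulr1.
  rewrite ck ek; split => [/eqP | ->]; last by rewrite scale0r.
  by rewrite scaler_eq0 (negPf c0) orbF => /eqP.
pose w l := phi (delta_mx 0 l).
have phi_sum x : phi x = \sum_l x 0 l * w l.
  rewrite {1}(row_sum_delta x) /phi linear_sum linear_sum /=.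
  by apply: eq_bigr => l _; rewrite !linearZ.
exists w; split.
  by move=> x; rewrite psiH phiE phi_sum.
case: (boolP [exists l, w l != 0]) => [/existsP//|].
rewrite negb_exists => /forallP allw; exfalso.
have : c \in H.
  apply/psiH/phiE; rewrite phi_sum big1 // => l _.
  by move: (allw l); rewrite negbK => /eqP ->; rewrite mulr0.
by rewrite (negPf cH).
Qed.
End Hyp.

Unset Implicit Arguments.
Set Strict Implicit.

Theorem corollary5p4 (F : fieldType) (n h : nat)
  (h_ge1 : (1 <= h)%N) (h_le : (h <= n.-1)%N)
  (H : {vspace 'rV[F]_('C(n.+1, h.+1))})
  (hypH : is_hyperplane H) :
  exists W : {vspace 'rV[F]_('C(n.+1, h))},
    ('C(n.+1, h) <= \dim W + (n + 1))%N /\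
    (\dim W + (h + 1) <= 'C(n.+1, h))%N /\
    (forall V : {vspace 'rV[F]_(n.+1)}, \dim V = h ->
       (singular_for H V <-> plucker h V \in W)).
Proof.
have C2pos : (0 < 'C(n.+1, h.+1))%N.
  by rewrite bin_gt0 ltnS (leq_trans h_le (leq_pred n)).
have [w [wH [l0 wl0]]] := hyp_fun C2pos hypH.
exists (lker (fl w)).
have dimE : (\dim (lker (fl w)) + \dim (limg (fl w)) = 'C(n.+1, h))%N.
  by have := limg_ker_dim (fl w) fullv; rewrite capfv dim_rV.
have ub : (\dim (limg (fl w)) <= n.+1)%N.
  by have := dimvS (subvf (limg (fl w))); rewrite dim_rV.
have lb := rank_lb wl0.
move: dimE ub lb; set a := \dim (lker _); set b := \dim (limg _) => dimE ub lb.
split; first by lia.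
split; first by rewrite -dimE leq_add2l addn1.
move=> V eV.
have memW p : p \in lker (fl w) <-> forall u, Phi w p u = 0.
  rewrite memv_ker flE; split => [/eqP pG u | Hu].
    by rewrite Phi_sum2 big1 // => j _; rewrite -GmE pG mxE mulr0.
  by apply/eqP/rowP => j; rewrite GmE Hu mxE.
rewrite memW.
have Phic (U : {vspace 'rV[F]_(n.+1)}) u c :
    (forall l, Lam (plucker h V) u l = c * plucker h.+1 U 0 l) ->
    Phi w (plucker h V) u = c * \sum_l plucker h.+1 U 0 l * w l.
  by move=> hc; rewrite /Phi mulr_sumr; apply: eq_bigr => l _; rewrite hc; ring.
split.
- case=> _ sing u; case: (boolP (u \in V)) => uV.
    by rewrite /Phi big1 // => l _; rewrite key_a // mulr0.
  have [sX fX] := basis_tcast eV.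
  set X := tcast eV (vbasis V) in sX fX.
  have uX : u \notin <<X>>%VS by rewrite sX.
  have [fY dY] := rcons_free fX uX.
  set U := <<rcons X u>>%VS in dY.
  have VU : (V <= U)%VS.
    by rewrite -sX; apply: sub_span => x xX; rewrite mem_rcons inE xX orbT.
  have uU : u \in U by apply: memv_span; rewrite mem_rcons mem_head.
  have [_ inH] := sing U dY VU.
  have [c c0 hc] := key_b eV dY VU uU uV.
  by rewrite (Phic U u c hc); move/wH: inH => ->; rewrite mulr0.
- move=> Hu; split => // U eU VU.
  have [x xU xV] : exists2 x, x \in U & x \notin V.
    case: (boolP (has (fun x => x \notin V) (vbasis U))) => [/hasP[x xB xV] | /hasPn allV].
      by exists x => //; apply: vbasis_mem.
    have : (<<vbasis U>> <= V)%VS by apply/span_subvP => x /allV; rewrite negbK.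
    rewrite (span_basis (vbasisP _)) => /dimvS; rewrite eU eV; lia.
  split => //; apply/wH.
  have [c c0 hc] := key_b eV eU VU xU xV.
  have := Hu x; rewrite (Phic U x c hc) => /eqP; rewrite mulf_eq0 (negPf c0) /=.
  by move/eqP.
Qed.
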